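(* Let $(X,T)$ be a dynamical system and $\mathcal{F}$ a family. (i) If $\mathcal{F}$ is free, then $\omega_{\mathcal{F}}(x)\subset\omega_T(x)$ for every $x\in X$. Moreover, if $(X,T)$ has a nonrecurrent point and $\omega_{\mathcal{F}}(x)\subset\omega_T(x)$ for every $x\in X$, then $\mathcal{F}$ is free. (ii) If $\mathcal{F}$ is free and has the finite intersection property, then it has the strong finite intersection property.
   Context: A dynamical system $(X,T)$: $X$ is a compact metric space with more than one point and without isolated points, $T:X\to X$ a continuous surjection. A family is a collection $\mathcal{F}$ of subsets of $\mathbb{Z}_+$ that is hereditary upward. $\mathcal{F}$ is free if the intersection of all its elements is empty. $\omega_{\mathcal{F}}(x)=\bigcap_{F\in\mathcal{F}}\overline{\{T^ix:i\in F\}}$; $\omega_T(x)=\bigcap_{n\ge1}\overline{\{T^kx:k\ge n\}}$. A point $x$ is recurrent if $x\in\omega_T(x)$. $\mathcal{F}$ has the finite intersection property if every finite subcollection has nonempty intersection, and the strong finite intersection property if every finite subcollection has infinite intersection. *)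

(* Defs.v *)
From HB Require Import structures.
From mathcomp Require Import all_boot all_order all_algebra.
From mathcomp Require Import all_classical all_reals all_analysis.
Set Implicit Arguments. Unset Strict Implicit. Unset Printing Implicit Defensive.
Import Order.TTheory GRing.Theory Num.Theory.
Local Open Scope classical_set_scope.

Definition dynamical_system {R : realType} (X : metricType R) (T : X -> X) :=
  [/\ compact [set: X],
      (exists x y : X, x <> y),
      isolated [set: X] = set0,
      continuous T &
      (forall y : X, exists x, T x = y)].

(* family: collection of subsets of Z_+ = nat, hereditary upward *)
Definition is_family (F : set (set nat)) :=
  forall A B : set nat, F A -> A `<=` B -> F B.

Definition free_family (F : set (set nat)) := \bigcap_(A in F) A = set0.

Definition omegaF {X : topologicalType} (T : X -> X) (F : set (set nat)) (x : X) :=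
  \bigcap_(A in F) closure [set iter i T x | i in A].

Definition omegaT {X : topologicalType} (T : X -> X) (x : X) :=
  \bigcap_(n in [set n : nat | (1 <= n)%N])
     closure [set iter k T x | k in [set k : nat | (n <= k)%N]].

Definition recurrent {X : topologicalType} (T : X -> X) (x : X) := omegaT T x x.

Definition fip (F : set (set nat)) :=
  forall G : set (set nat), finite_set G -> G `<=` F -> \bigcap_(A in G) A !=set0.

Definition strong_fip (F : set (set nat)) :=
  forall G : set (set nat), finite_set G -> G `<=` F -> infinite_set (\bigcap_(A in G) A).

(* Main.v *)
Require Import Defs.
From HB Require Import structures.
From mathcomp Require Import all_boot all_order all_algebra.
From mathcomp Require Import all_classical all_reals all_analysis.
Local Open Scope classical_set_scope.

Lemma iter_period (Y : Type) (f : Y -> Y) (x : Y) m p :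
  iter (p + m) f x = iter m f x -> forall k, iter (k * p + m) f x = iter m f x.
Proof.
move=> H; elim=> [|k IH] //=.
by rewrite mulSn -addnA iterD IH -iterD.
Qed.

Lemma key_closure (R : realType) (X : metricType R) (T : X -> X) (x y : X)
   (A : set nat) n :
  closure [set iter i T x | i in A] y ->
  closure [set iter k T x | k in [set k : nat | (n <= k)%N]] y \/
  exists i, [/\ A i, (i < n)%N & iter i T x = y].
Proof.
move=> Hy.
have sub : [set iter i T x | i in A] `<=`
   [set iter i T x | i in A `&` `I_n] `|` [set iter k T x | k in [set k : nat | (n <= k)%N]].
  move=> z [i Ai <-]; case: (ltnP i n) => hi.
    by left; exists i.
  by right; exists i.
have := closureS sub Hy; rewrite closureU => -[|]; last by left.
have cl : closed [set iter i T x | i in A `&` `I_n].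
  apply: (proj1 (@accessible_finite_set_closed X)); last first.
    by apply: finite_image; apply: finite_setIr.
  exact/hausdorff_accessible/metric_hausdorff.
rewrite -(proj1 (closure_id _) cl) => -[i [Ai lin] <-].
by right; exists i.
Qed.

Theorem proposition2p2 (R : realType) (X : metricType R) (T : X -> X)
    (F : set (set nat)) :
  dynamical_system T -> is_family F ->
  [/\ (free_family F -> forall x : X, omegaF T F x `<=` omegaT T x),
      ((exists x : X, ~ recurrent T x) ->
         (forall x : X, omegaF T F x `<=` omegaT T x) -> free_family F) &
      (free_family F -> fip F -> strong_fip F)].
Proof.
move=> [_ _ _ _ surj] famF; split.
- move=> fr x y Hy n n1.
  have frP : forall i, exists A, F A /\ ~ A i.
    move=> i; apply: contrapT => H.
    have : (\bigcap_(A in F) A) i.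
      move=> A FA; apply: contrapT => nA; apply: H; by exists A.
    by rewrite fr.
  apply: contrapT => ny.
  have [A0 [FA0 _]] := frP 0%N.
  case: (@key_closure _ _ T x y _ n (Hy A0 FA0)) => // -[m [_ mn em]].
  have [A1 [FA1 nA1]] := frP m.
  case: (@key_closure _ _ T x y _ n (Hy A1 FA1)) => // -[m' [A1m' m'n em']].
  have mm' : m != m' by apply/eqP => E; apply: nA1; rewrite E.
  apply: ny; apply: subset_closure.
  clear A1m' nA1 mn m'n.
  wlog lt : m m' em em' mm' / (m < m')%N.
    move=> W; case: (ltngtP m m') => h; first exact: (W m m').
      by apply: (W m' m) => //; rewrite eq_sym.
    by rewrite h eqxx in mm'.
  have per : iter ((m' - m) + m) T x = iter m T x 
    by rewrite subnK ?em ?em' //; exact: ltnW.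
  exists (n * (m' - m) + m).
    rewrite /=; apply: leq_trans (leq_addr _ _).
    by apply: leq_pmulr; rewrite subn_gt0.
  by rewrite (@iter_period _ _ _ _ _ per) em.
- move=> [x0 nrec] H; apply/seteqP; split => // i Hi; exfalso; apply: nrec.
  have [z ez] : exists z, iter i T z = x0.
    elim: i {Hi} x0 => [|i IH] x0; first by exists x0.
    have [w <-] := surj x0; have [z ez] := IH w; exists z => /=; by rewrite ez.
  have : omegaF T F z x0.
    move=> A FA; apply: subset_closure; exists i => //; exact: Hi.
  move=> /H Hz N N1.
  have HzN := Hz (N + i)%N (leq_trans N1 (leq_addr _ _)).
  apply: (closureS _ HzN) => w [k hk <-]; exists (k - i).
    rewrite /= leq_subRL; last exact: (leq_trans (leq_addl _ _) hk).
    by rewrite addnC.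
  rewrite -ez -iterD subnK //; exact: (leq_trans (leq_addl _ _) hk).
- move=> fr fipF G finG GF fI.
  have frP : forall i, exists A, F A /\ ~ A i.
    move=> i; apply: contrapT => H.
    have : (\bigcap_(A in F) A) i.
      move=> A FA; apply: contrapT => nA; apply: H; by exists A.
    by rewrite fr.
  have [f hf] := choice frP.
  have finG' : finite_set (G `|` f @` (\bigcap_(A in G) A)).
    by rewrite finite_setU; split => //; apply: finite_image.
  have subG' : G `|` f @` (\bigcap_(A in G) A) `<=` F.
    by move=> A [/GF //|[i _ <-]]; exact: (hf i).1.
  have [i Hi] := fipF _ finG' subG'.
  have iI : (\bigcap_(A in G) A) i by move=> A GA; apply: Hi; left.
  by apply: (hf i).2; apply: Hi; right; exists i.
Qed.
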